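(* Let $\mathcal{A}$ be a finite alphabet equipped with a total order $<$, extended to the lexicographic order on infinite words, and let $a \in \mathcal{A}$. Suppose $\mathbf{t}, \mathbf{s}, \mathbf{t}^{(1)}, \mathbf{s}^{(1)} \in \mathcal{A}^{\omega}$ are infinite words such that $\mathbf{t} = \Psi_z(\mathbf{t}^{(1)})$ and $\mathbf{s} = \Psi_z(\mathbf{s}^{(1)})$ for some letter $z$ that occurs in $\mathbf{t}^{(1)}$. Then \[ \min(\mathbf{t}^{(1)}) = a\mathbf{s}^{(1)} \iff \min(\mathbf{t}) = a\mathbf{s}. \]
   Context: For a letter $z \in \mathcal{A}$, $\Psi_z$ is the morphism of $\mathcal{A}^*$ defined by $\Psi_z(z) = z$ and $\Psi_z(y) = zy$ for every letter $y \neq z$; it extends letterwise to infinite words. Lexicographic order on words: $u < v$ iff $u$ is a proper prefix of $v$, or $u = xbu'$, $v = xcv'$ with letters $b < c$; for infinite words $\mathbf{u} < \mathbf{v}$ iff they first differ at some position where $\mathbf{u}$ has the smaller letter. For an infinite word $\mathbf{w}$ and $k \ge 1$, let $\min(\mathbf{w}\,|\,k)$ denote the lexicographically smallest factor (contiguous block) of $\mathbf{w}$ of length $k$; these are prefixes of one another, and $\min(\mathbf{w})$ is the infinite word $\lim_{k\to\infty} \min(\mathbf{w}\,|\,k)$. *)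

(* Defs.v *)
From HB Require Import structures.
From mathcomp Require Import all_boot all_order.
Set Implicit Arguments. Unset Strict Implicit. Unset Printing Implicit Defensive.
Import Order.TTheory.
Local Open Scope order_scope.

Section Words.
Context {d : Order.disp_t} {A : finOrderType d}.

Definition iword := nat -> A.

Fixpoint lexle (u v : seq A) : bool :=
  match u, v with
  | [::], _ => true
  | _ :: _, [::] => false
  | x :: u', y :: v' => (x < y) || ((x == y) && lexle u' v')
  end.

Definition wprefix (w : iword) (k : nat) : seq A := [seq w j | j <- iota 0 k].

Definition wfactor (w : iword) (i k : nat) : seq A := [seq w (i + j) | j <- iota 0 k].

Definition is_min_factor (w : iword) (k : nat) (u : seq A) : Prop :=
  (exists i, u = wfactor w i k) /\ (forall i, lexle u (wfactor w i k)).

(* m = min(w) = lim_k min(w | k): every length-k prefix of m is min(w | k). *)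
Definition is_min_word (w m : iword) : Prop :=
  forall k, is_min_factor w k (wprefix m k).

Definition wcons (a : A) (s : iword) : iword :=
  fun n => if n is n'.+1 then s n' else a.

Definition psi (z y : A) : seq A := if y == z then [:: z] else [:: z; y].

(* Letterwise extension to infinite words: Psi_z(w) = Psi_z(w_0) Psi_z(w_1) ...
   Since each image is nonempty, the first n+1 letters of w determine the
   letter at position n of the image. *)
Definition psiw (z : A) (w : iword) : iword :=
  fun n => nth z (flatten [seq psi z (w i) | i <- iota 0 n.+1]) n.

End Words.

(* Main.v *)
Require Import Defs.
From mathcomp Require Import all_boot all_order.
From mathcomp Require Import zify.
From Stdlib Require Import FunctionalExtensionality.
Set Implicit Arguments. Unset Strict Implicit. Unset Printing Implicit Defensive.
Import Order.TTheory.

Section Proofs.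
Context {d : Order.disp_t} {A : finOrderType d}.

Definition sh (i : nat) (w : nat -> A) : nat -> A := fun n => w (i + n).
Definition agree k (u v : nat -> A) := forall n, n < k -> u n = v n.
Definition wle (u v : nat -> A) := forall k, lexle (wprefix u k) (wprefix v k).

Lemma sh_cons (w : nat -> A) : wcons (w 0) (sh 1 w) = w.
Proof. by apply: functional_extensionality => -[|n]. Qed.
Lemma sh_wcons (x : A) u j : sh j.+1 (wcons x u) = sh j u.
Proof. by apply: functional_extensionality => n; rewrite /sh addSn. Qed.
Lemma sh0 (w : nat -> A) : sh 0 w = w. Proof. by apply: functional_extensionality. Qed.
Lemma sh_sh i j (w : nat -> A) : sh j (sh i w) = sh (i + j) w.
Proof. by apply: functional_extensionality => n; rewrite /sh addnA. Qed.
Lemma sh1S i (w : nat -> A) : sh i (sh 1 w) = sh i.+1 w.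
Proof. by rewrite sh_sh add1n. Qed.
Lemma sh_split (w : nat -> A) i : sh i w = wcons (w i) (sh i.+1 w).
Proof.
apply: functional_extensionality => -[|n]; rewrite /sh /=; first by rewrite addn0.
by rewrite addnS addSn.
Qed.

Lemma size_flatten_psi z (f : nat -> A) (l : seq nat) :
  size l <= size (flatten [seq psi z (f i) | i <- l]).
Proof.
elim: l => //= i l IH; rewrite size_cat /psi; case: (f i == z) => /=; rewrite ?add1n ?add2n ltnS //; exact: leq_trans IH (leqnSn _).
Qed.

Lemma psiwE z (w : nat -> A) n m : n < m ->
  psiw z w n = nth z (flatten [seq psi z (w i) | i <- iota 0 m]) n.
Proof.
move=> nm; rewrite /psiw -(subnKC nm) iotaD map_cat flatten_cat nth_cat.
have := size_flatten_psi z w (iota 0 n.+1); rewrite size_iota => H.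
by rewrite H.
Qed.

Lemma psi_cons z x (u : nat -> A) :
  psiw z (wcons x u) = if x == z then wcons z (psiw z u)
                       else wcons z (wcons x (psiw z u)).
Proof.
apply: functional_extensionality => n.
have E : forall m, flatten [seq psi z (wcons x u i) | i <- iota 0 m.+1] =
  psi z x ++ flatten [seq psi z (u i) | i <- iota 0 m].
  move=> m /=; rewrite (_ : iota 1 m = map (addn 1) (iota 0 m)); last by rewrite -iotaDl.
  by rewrite -map_comp.
rewrite {1}/psiw E {1}/psi.
case: (x == z); case: n => [|n]; rewrite ?cat1s //.
case: n => [|n] //.
transitivity (nth z (flatten [seq psi z (u i) | i <- iota 0 n.+2]) n); first by [].
by rewrite -psiwE.
Qed.

Lemma P0 z (w : nat -> A) : psiw z w 0 = z.
Proof. by rewrite -(sh_cons w) psi_cons; case: ifP. Qed.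

Lemma Pcons z (w : nat -> A) : psiw z w = wcons z (sh 1 (psiw z w)).
Proof. by rewrite -{1}(sh_cons (psiw z w)) P0. Qed.

Lemma psi_suffix z (w : nat -> A) i : exists j, sh j (psiw z w) = psiw z (sh i w).
Proof.
elim: i w => [|i IH] w; first by exists 0; rewrite !sh0.
have [j Hj] := IH (sh 1 w).
rewrite sh1S in Hj.
have E := psi_cons z (w 0) (sh 1 w); rewrite sh_cons in E.
case: (w 0 == z) E => E.
- by exists j.+1; rewrite E sh_wcons.
- by exists j.+2; rewrite E !sh_wcons.
Qed.

Lemma psi_suffix_inv z (w : nat -> A) j : exists i,
  sh j (psiw z w) = psiw z (sh i w) \/
  (w i != z /\ sh j (psiw z w) = wcons (w i) (psiw z (sh i.+1 w))).
Proof.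
elim: j {-2}j (leqnn j) w => [|n IH] j Hj w.
  by move: Hj; rewrite leqn0 => /eqP ->; exists 0; left; rewrite !sh0.
have E := psi_cons z (w 0) (sh 1 w); rewrite sh_cons in E.
case: j Hj => [|j] Hj; first by exists 0; left; rewrite !sh0.
case Hw: (w 0 == z) in E.
- rewrite E sh_wcons.
  have [i Hi] := IH j Hj (sh 1 w); exists i.+1; move: Hi; rewrite !sh1S; exact.
- rewrite E sh_wcons; case: j Hj => [|j] Hj.
    by exists 0; right; rewrite Hw sh0.
  rewrite sh_wcons.
  have [i Hi] := IH j (ltnW Hj) (sh 1 w); exists i.+1; move: Hi; rewrite !sh1S; exact.
Qed.

Lemma wprefix_cons (x : A) u k : wprefix (wcons x u) k.+1 = x :: wprefix u k.
Proof.
rewrite /wprefix /= (_ : iota 1 k = map (addn 1) (iota 0 k)); last by rewrite -iotaDl.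
by rewrite -map_comp.
Qed.

Lemma wle_cons (x : A) u y v :
  wle (wcons x u) (wcons y v) <-> (x < y)%O \/ (x = y /\ wle u v).
Proof.
split.
- move=> H; have := H 1; rewrite !wprefix_cons /= andbT.
  case/orP => [-> | /eqP exy]; first by left.
  subst y; right; split=> // k; have := H k.+1; rewrite !wprefix_cons /= ltxx eqxx.
  exact.
- case=> [lt k | [-> H] k]; case: k => [|k] //; rewrite !wprefix_cons /=.
    by rewrite lt.
  by rewrite ltxx eqxx /=; apply: H.
Qed.

Lemma wle_head (a : A) X (w : nat -> A) i :
  wle (wcons a X) (sh i w) -> (a < w i)%O \/ a = w i.
Proof.
rewrite (sh_split w i) => /wle_cons [H|[H _]]; by [left | right].
Qed.

Lemma wprefix_agree (u v : nat -> A) k : wprefix u k = wprefix v k <-> agree k u v.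
Proof.
split.
- move=> H n nk; have := congr1 (fun s => nth (u 0) s n) H.
  by rewrite /wprefix !(nth_map 0) ?size_iota // nth_iota.
- move=> H; rewrite /wprefix; apply/eq_in_map => j.
  rewrite mem_iota add0n => /andP [_ jk]; exact: H.
Qed.

Lemma agree_cons k (x : A) u y v :
  agree k.+1 (wcons x u) (wcons y v) <-> x = y /\ agree k u v.
Proof.
split.
- by move=> H; split; [exact: (H 0) | move=> n nk; exact: (H n.+1)].
- by move=> [-> H] [|n] nk //=; apply: H.
Qed.

Lemma agree_mono k k' (u v : nat -> A) : k <= k' -> agree k' u v -> agree k u v.
Proof. by move=> kk H n nk; apply: H; apply: leq_trans kk. Qed.

Lemma agree_psi z k (u v : nat -> A) : agree k u v -> agree k (psiw z u) (psiw z v).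
Proof.
move=> H n nk; rewrite /psiw; congr (nth _ (flatten _) _).
apply/eq_in_map => i; rewrite mem_iota add0n => /andP [_ ilt].
by rewrite H // (leq_trans ilt nk).
Qed.

Lemma agree_psi_inv z k (u v : nat -> A) :
  agree k.*2 (psiw z u) (psiw z v) -> agree k u v.
Proof.
elim: k u v => [|k IH] u v; first by move=> _ n.
rewrite -(sh_cons u) -(sh_cons v).
move: (u 0) (sh 1 u) (v 0) (sh 1 v) => x u' y v'.
rewrite doubleS !psi_cons.
case: (eqVneq x z) => [->|xz]; case: (eqVneq y z) => [->|yz].
- move/agree_cons => [_ H]; apply/agree_cons; split=> //.
  by apply: IH; apply: agree_mono H.
- move/agree_cons => [_ /(_ 0 isT)]; rewrite P0 /= => zy.
  by rewrite zy eqxx in yz.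
- move/agree_cons => [_ /(_ 0 isT)]; rewrite P0 /= => zy.
  by rewrite zy eqxx in xz.
- move/agree_cons => [_ /agree_cons [-> H]]; apply/agree_cons; split=> //.
  exact: IH.
Qed.

Lemma psi_mono z (u v : nat -> A) : wle u v -> wle (psiw z u) (psiw z v).
Proof.
move=> H k; elim: k {-2}k (leqnn k) u v H => [|n IH] k Hk u v H.
  by move: Hk; rewrite leqn0 => /eqP ->.
case: k Hk => [|k] Hk; first by [].
rewrite -(sh_cons u) -(sh_cons v) in H *.
move: (u 0) (sh 1 u) (v 0) (sh 1 v) H => x u' y v' /wle_cons [H|[<- H]].
- rewrite !psi_cons (Pcons z u') (Pcons z v').
  case: (eqVneq x z) => [xz|xz]; case: (eqVneq y z) => [yz|yz].
  + by move: H; rewrite xz yz ltxx.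
  + case: k Hk => [|k] Hk; rewrite !wprefix_cons /= ltxx eqxx //=.
    by rewrite -xz H.
  + case: k Hk => [|k] Hk; rewrite !wprefix_cons /= ltxx eqxx //=.
    by rewrite -yz H.
  + case: k Hk => [|k] Hk; rewrite !wprefix_cons /= ltxx eqxx //=.
    by rewrite H.
- rewrite !psi_cons; case: (eqVneq x z) => [xz|xz].
  + rewrite !wprefix_cons /= ltxx eqxx /=; exact: IH.
  + case: k Hk => [|k] Hk; rewrite !wprefix_cons /= ltxx eqxx //=.
    rewrite ltxx eqxx /=; apply: IH => //; exact: ltnW.
Qed.

Lemma psi_refl z (u v : nat -> A) : wle (psiw z u) (psiw z v) -> wle u v.
Proof.
move=> H k; elim: k u v H => [|k IH] u v H; first by [].
rewrite -(sh_cons u) -(sh_cons v) in H *.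
move: (u 0) (sh 1 u) (v 0) (sh 1 v) H => x u' y v'.
rewrite !psi_cons !wprefix_cons /=.
case: (eqVneq x z) => [->|xz]; case: (eqVneq y z) => [->|yz].
- move/wle_cons => [|[_ H]]; first by rewrite ltxx.
  rewrite ltxx /=; exact: IH.
- rewrite (Pcons z u') => /wle_cons [|[_]]; first by rewrite ltxx.
  move/wle_cons => [zy|[zy _]]; first by rewrite zy.
  by rewrite zy eqxx in yz.
- rewrite (Pcons z v') => /wle_cons [|[_]]; first by rewrite ltxx.
  move/wle_cons => [zy|[zy _]]; first by rewrite zy.
  by rewrite zy eqxx in xz.
- move/wle_cons => [|[_]]; first by rewrite ltxx.
  move/wle_cons => [xy|[xy H]]; first by rewrite xy.
  subst y; rewrite ltxx eqxx /=; apply: IH; exact: H.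
Qed.

Lemma min_wordP (w m : nat -> A) : is_min_word w m <->
  (forall k, exists i, agree k m (sh i w)) /\ (forall i, wle m (sh i w)).
Proof.
split.
- move=> H; split.
  + move=> k; have [[i Hi] _] := H k; exists i.
    exact: (proj1 (wprefix_agree m (sh i w) k) Hi).
  + move=> i k; have [_ Hk] := H k; exact: Hk.
- move=> [H1 H2] k; split.
  + have [i Hi] := H1 k; exists i.
    exact: (proj2 (wprefix_agree m (sh i w) k) Hi).
  + move=> i; exact: H2.
Qed.

End Proofs.

Theorem mainTheorem1 (d : Order.disp_t) (A : finOrderType d) (a z : A)
  (t s t1 s1 : nat -> A) :
  t = psiw z t1 -> s = psiw z s1 -> (exists i, t1 i = z) ->
  (is_min_word t1 (wcons a s1) <-> is_min_word t (wcons a s)).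
Proof.
move=> -> -> [i0 Hi0]; rewrite !min_wordP; split.
- move=> [H1 H2].
  have az : (a < z)%O \/ a = z by rewrite -Hi0; exact: wle_head (H2 i0).
  case: az => [az|az].
  + have Em : psiw z (wcons a s1) = wcons z (wcons a (psiw z s1)).
      by rewrite psi_cons (lt_eqF az).
    split.
    * move=> k; have [i Hi] := H1 k.+1; have [j Hj] := psi_suffix z t1 i.
      have := agree_psi z Hi; rewrite Em -Hj -(sh_cons (sh j (psiw z t1))).
      move/agree_cons => [_ H]; exists (j + 1); rewrite -sh_sh; exact: H.
    * move=> j; have [i [Hi | [Hn Hi]]] := psi_suffix_inv z t1 j; rewrite Hi.
      - rewrite (Pcons z (sh i t1)); apply/wle_cons; by left.
      - have H := H2 i; rewrite (sh_split t1 i) in H.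
        have := psi_mono z H; rewrite Em psi_cons (negbTE Hn).
        by move/wle_cons => [|[_ //]]; rewrite ltxx.
  + subst a.
    have Em : wcons z (psiw z s1) = psiw z (wcons z s1) by rewrite psi_cons eqxx.
    rewrite Em; split.
    * move=> k; have [i Hi] := H1 k; have [j Hj] := psi_suffix z t1 i.
      exists j; rewrite Hj; exact: agree_psi.
    * move=> j; have [i [Hi | [Hn Hi]]] := psi_suffix_inv z t1 j; rewrite Hi.
      - exact: psi_mono (H2 i).
      - rewrite psi_cons eqxx; apply/wle_cons; left.
        case: (wle_head (H2 i)) => [//|e].
        by rewrite -e eqxx in Hn.
- move=> [H1 H2].
  have az : (a < z)%O \/ a = z.
    have := wle_head (H2 0); by rewrite P0.
  case: az => [az|az].
  + split.
    * move=> k; have [j Hj] := H1 k.*2.+1.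
      have [i [Hi|[Hn Hi]]] := psi_suffix_inv z t1 j; rewrite Hi in Hj.
      - rewrite (Pcons z (sh i t1)) in Hj.
        have [e _] := proj1 (agree_cons _ _ _ _ _) Hj.
        by move: az; rewrite e ltxx.
      - move/agree_cons: Hj => [e Hj].
        exists i; apply: (agree_mono (leqnSn k)); rewrite (sh_split t1 i) -e.
        apply/agree_cons; split=> //; exact: agree_psi_inv Hj.
    * move=> i; rewrite (sh_split t1 i).
      case: (eqVneq (t1 i) z) => [e|ne].
      - by apply/wle_cons; left; rewrite e.
      - have [j Hj] := psi_suffix z t1 i.
        have := H2 (j + 1); rewrite -sh_sh Hj (sh_split t1 i) psi_cons (negbTE ne).
        rewrite sh_wcons sh0 => /wle_cons [lt|[e H]].
          by apply/wle_cons; left.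
        apply/wle_cons; right; split=> //; exact: psi_refl H.
  + subst a.
    have Em : wcons z (psiw z s1) = psiw z (wcons z s1) by rewrite psi_cons eqxx.
    rewrite Em in H1 H2; split.
    * move=> k; have [j Hj] := H1 k.*2.
      have [i [Hi|[Hn Hi]]] := psi_suffix_inv z t1 j.
      - exists i; apply: (@agree_psi_inv _ _ z); move: Hj; rewrite Hi; exact.
      - case: k Hj => [|k] Hj; first by exists 0 => n.
        rewrite Hi psi_cons eqxx doubleS in Hj.
        have [e _] := proj1 (agree_cons _ _ _ _ _) Hj.
        by rewrite -e eqxx in Hn.
    * move=> i; have [j Hj] := psi_suffix z t1 i; apply: (psi_refl (z:=z)).
      rewrite -Hj; exact: H2.
Qed.
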